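(* Let $\Gamma$ be a $\mathbb{D}_n$-symmetric billiard curve and let $H=\langle\rho,\sigma\rangle\subset\mathbb{D}_n$ be a dihedral subgroup of order $4$, generated by a rotation $\rho$ of order $2$ and a reflection $\sigma$. Let $z\in\Gamma^{\mathbb{Z}}$ be a billiard sequence of minimal period $p\ge3$ with spatiotemporal symmetry group $H(z)=H$. Then $p$ is even and exactly one of the following holds: - (I) $\rho(z_i)=z_{p/2+i}$ for all $i$, and $\sigma(z_i)=z_{k-i}$ for all $i$ for a unique $0\le k<p$. - (II) $\rho(z_i)=z_{k-i}$ for all $i$ for a unique odd $0<k<p$, and either $\sigma(z_i)=z_{p/2+i}$ for all $i$ or $(\rho\sigma)(z_i)=z_{p/2+i}$ for all $i$.
   Context: $\mathbb{D}_n=\langle R,S\rangle$, where $R$ is rotation by $2\pi/n$ and $S$ is the horizontal reflection. A $\mathbb{D}_n$-symmetric billiard curve is a $C^2$ simple closed $\mathbb{D}_n$-invariant curve bounding a strictly convex domain. A billiard sequence is $z\in\Gamma^{\mathbb{Z}}$ with $z_i\ne z_{i+1}$. $H(z)$ is the set of $h\in\mathbb{D}_n$ for which there is $k\in\mathbb{Z}$ with $h(z_i)=z_{k+i}$ for all $i$ or $h(z_i)=z_{k-i}$ for all $i$. *)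

(* Defs.v *)
From HB Require Import structures.
From mathcomp Require Import all_boot all_order all_algebra.
From mathcomp Require Import all_classical all_reals all_analysis.
Set Implicit Arguments. Unset Strict Implicit. Unset Printing Implicit Defensive.
Import Order.TTheory GRing.Theory Num.Theory.
Import numFieldNormedType.Exports.
Local Open Scope classical_set_scope.
Local Open Scope ring_scope.

Definition pt (R : realType) := (R * R)%type.

Definition rotp (R : realType) (a : R) (q : pt R) : pt R :=
  (cos a * q.1 - sin a * q.2, sin a * q.1 + cos a * q.2).

Definition rotD (R : realType) (n j : nat) : pt R -> pt R :=
  rotp (2 * pi * j%:R / n%:R).

Definition reflS (R : realType) (q : pt R) : pt R := (q.1, - q.2).

Definition Dn (R : realType) (n : nat) : set (pt R -> pt R) :=
  [set g | exists j : nat, exists b : bool,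
     g = rotD (R:=R) n j \o (if b then reflS (R:=R) else id)].

Definition is_rotation (R : realType) (n : nat) (g : pt R -> pt R) : Prop :=
  exists j : nat, g = rotD (R:=R) n j.

Definition is_reflection (R : realType) (n : nat) (g : pt R -> pt R) : Prop :=
  exists j : nat, g = rotD (R:=R) n j \o reflS (R:=R).

Definition order2 (R : realType) (g : pt R -> pt R) : Prop :=
  g \o g = id /\ g <> id.

(* The subgroup generated by a and b: the smallest set of maps containing
   id, a, b and closed under composition (in the finite group D_n this is
   the generated subgroup). *)
Inductive gen2 (R : realType) (a b : pt R -> pt R) : (pt R -> pt R) -> Prop :=
  | gen2_id : gen2 a b id
  | gen2_a : gen2 a b a
  | gen2_b : gen2 a b b
  | gen2_comp : forall f g, gen2 a b f -> gen2 a b g -> gen2 a b (f \o g).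

Definition gen_subgroup (R : realType) (a b : pt R -> pt R) : set (pt R -> pt R) :=
  [set g | gen2 a b g].

Definition cmb (R : realType) (t : R) (a b : pt R) : pt R :=
  (t * a.1 + (1 - t) * b.1, t * a.2 + (1 - t) * b.2).

Definition strictly_convex (R : realType) (K : set (pt R)) : Prop :=
  forall a b, K a -> K b -> a <> b ->
    forall t : R, 0 < t < 1 -> (interior K) (cmb t a b).

Definition C2 (R : realType) (f : R -> R) : Prop :=
  (forall t, derivable f t 1) /\ (forall t, derivable (derive1 f) t 1) /\
  continuous (derive1 (derive1 f)).

Definition C2_simple_closed_curve (R : realType) (G : set (pt R)) : Prop :=
  exists (x y : R -> R) (L : R), 0 < L /\ C2 x /\ C2 y /\
    (forall t, x (t + L) = x t /\ y (t + L) = y t) /\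
    (forall s t, 0 <= s < L -> 0 <= t < L -> (x s, y s) = (x t, y t) -> s = t) /\
    (forall t, (derive1 x t, derive1 y t) <> (0, 0)) /\
    G = [set (x t, y t) | t in `[0, L[%classic].

Definition Dn_billiard_curve (R : realType) (n : nat) (G : set (pt R)) : Prop :=
  C2_simple_closed_curve G /\
  (exists K : set (pt R), compact K /\ strictly_convex K /\
      G = closure K `\` interior K) /\
  (forall g, Dn (R:=R) n g -> g @` G = G).

Definition billiard_seq (R : realType) (G : set (pt R)) (z : int -> pt R) : Prop :=
  (forall i, G (z i)) /\ (forall i, z i <> z (i + 1)%R).

Definition minimal_period (R : realType) (z : int -> pt R) (p : nat) : Prop :=
  (0 < p)%N /\ (forall i, z (i + p%:Z)%R = z i) /\
  (forall q : nat, (0 < q < p)%N -> ~ (forall i, z (i + q%:Z)%R = z i)).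

Definition Hsym (R : realType) (n : nat) (z : int -> pt R) : set (pt R -> pt R) :=
  [set h | Dn (R:=R) n h /\ exists k : int,
     (forall i, h (z i) = z (k + i)%R) \/ (forall i, h (z i) = z (k - i)%R)].

(* Main.v *)
Require Import Defs.
From HB Require Import structures.
From mathcomp Require Import all_boot all_order all_algebra.
From mathcomp Require Import all_classical all_reals all_analysis.
From mathcomp Require Import zify ring lra.
Import Order.TTheory GRing.Theory Num.Theory.
Import numFieldNormedType.Exports.
Set Implicit Arguments. Unset Strict Implicit. Unset Printing Implicit Defensive.
Local Open Scope classical_set_scope.
Local Open Scope ring_scope.

Definition refl (R : realType) (c s : R) (q : pt R) : pt R :=
  (c * q.1 + s * q.2, s * q.1 - c * q.2).

Lemma clK (R : realType) (K : set (R * R)%type) : compact K -> closure K = K.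
Proof. move=> cK. apply/esym/closure_id. exact: compact_closed. Qed.

Lemma GL (R : realType) n (G : set (pt R)) : Dn_billiard_curve n G ->
  forall a b (t : R), G a -> G b -> a <> b -> 0 < t < 1 -> ~ G (cmb t a b).
Proof.
case=> _ [[K [cK [sK GE]]] _] a b t; rewrite GE => -[Ca _] [Cb _] ab ht [_ nI].
rewrite (clK cK) in Ca Cb.
exact: nI (sK a b Ca Cb ab t ht).
Qed.

Lemma rotp_ord2 (R : realType) (a : R) :
  rotp a \o rotp a = id -> rotp a <> id -> forall q, rotp a q = (- q.1, - q.2).
Proof.
move=> H1 H2.
have e1 := congr1 (fun f => f (1, 0)) H1.
have e2 := congr1 (fun f => f (0, 1)) H1.
move: e1 e2; rewrite /= /rotp /=.
set c := cos a; set s := sin a.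
case=> h1 h2 [h3 h4].
have [s0 [c1|c1]] : s = 0 /\ (c = 1 \/ c = -1).
  clear H1 H2; move: h1 h2 h3 h4; clearbody c s => h1 h2 h3 h4.
  have sc : s * c = 0 by nra.
  have s0 : s = 0.
    move/eqP: sc; rewrite mulf_eq0 => /orP[/eqP //|/eqP c0].
    exfalso; rewrite c0 in h4; nra.
  split => //; rewrite s0 in h1.
  have : (c - 1) * (c + 1) = 0 by nra.
  move/eqP; rewrite mulf_eq0 => /orP[/eqP h|/eqP h]; [left|right]; lra.
  exfalso; apply: H2; apply: funext => -[x y]; rewrite /rotp -/c -/s c1 s0 /=.
  congr pair; ring.
move=> [x y]; rewrite /rotp -/c -/s c1 s0 /=; congr pair; ring.
Qed.

Lemma rho_form (R : realType) n (rho : pt R -> pt R) :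
  is_rotation n rho -> order2 rho -> forall q, rho q = (- q.1, - q.2).
Proof. case=> j -> [h1 h2]; exact: rotp_ord2. Qed.

Lemma sigma_form (R : realType) n (sigma : pt R -> pt R) :
  is_reflection n sigma -> exists c s : R, c ^+ 2 + s ^+ 2 = 1 /\
    forall q, sigma q = refl c s q.
Proof.
case=> j ->; exists (cos (2 * pi * j%:R / n%:R)), (sin (2 * pi * j%:R / n%:R)).
split; first exact: cos2Dsin2.
move=> [x y]; rewrite /= /rotD /rotp /reflS /refl /=; congr pair; rewrite /=; ring.
Qed.

Lemma refl_inv (R : realType) (c s : R) : c ^+ 2 + s ^+ 2 = 1 ->
  forall q, refl c s (refl c s q) = q.
Proof.
move=> h [x y]; rewrite /refl /=; congr pair.
  by rewrite -[RHS]mul1r -h; ring.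
by rewrite -[RHS]mul1r -h; ring.
Qed.

Lemma invb (R : realFieldType) (m w : R) : w * m = 1 -> (m < -1) || (1 < m) -> (-1 < w) && (w < 1).
Proof. move=> h /orP[hm|hm]; apply/andP; split; nra. Qed.

Section Main.
Variables (R : realType) (G : set (pt R)) (z : int -> pt R) (p : nat)
  (rho : pt R -> pt R).
Hypothesis HGL : forall a b (t : R), G a -> G b -> a <> b -> 0 < t < 1 -> ~ G (cmb t a b).
Hypothesis Hz : billiard_seq G z.
Hypothesis Hper : minimal_period z p.
Hypothesis Hp3 : (3 <= p)%N.
Hypothesis Hrho : forall q, rho q = (- q.1, - q.2).
Hypothesis Hrorb : forall i, exists j, rho (z i) = z j.

Lemma zG i : G (z i). Proof. exact: Hz.1. Qed.

Lemma zperN (n : nat) i : z (i + n%:Z * p%:Z) = z i.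
Proof.
elim: n i => [|n IH] i; first by rewrite mul0r addr0.
have -> : i + n.+1%:Z * p%:Z = (i + n%:Z * p%:Z) + p%:Z by nia.
by rewrite Hper.2.1 IH.
Qed.

Lemma zper (m : int) i : z (i + m * p%:Z) = z i.
Proof.
case: m => n; first exact: zperN.
rewrite -(zperN n.+1 (i + Negz n * p%:Z)); congr z.
rewrite NegzE; nia.
Qed.

Lemma zmin d : (forall i, z (i + d) = z i) -> exists m : int, d = m * p%:Z.
Proof.
move=> H; exists (d %/ p%:Z)%Z.
have p0 : (0 < p)%N := Hper.1.
have e := divz_eq d p%:Z.
have hq : forall i, z (i + (d %% p%:Z)%Z) = z i.
  move=> i; rewrite -(zper (d %/ p%:Z)%Z (i + (d %% p%:Z)%Z)) -[RHS](H i).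
  congr z; move: e; move: (d %/ p%:Z)%Z (d %% p%:Z)%Z => a b e; lia.
have [q0|qpos] : (d %% p%:Z)%Z = 0 \/ 0 < (d %% p%:Z)%Z by lia.
  by rewrite {1}e q0 addr0.
exfalso; apply: (Hper.2.2 (absz (d %% p%:Z)%Z)); first lia.
move=> i; rewrite -[RHS](hq i); congr z; lia.
Qed.

Lemma NZ i : z i <> (0, 0).
Proof.
move=> e.
have [j hj] := Hrorb (i + 1).
case E: (z (i + 1)) => [x y].
apply: (HGL (t := 1/2) (zG (i + 1)) (zG j)).
- rewrite -hj Hrho E /= => -[hx hy]; apply: (Hz.2 i); rewrite E e.
  congr pair; lra.
- lra.
- have -> : cmb (1/2) (z (i + 1)) (z j) = z i; last exact: zG.
  rewrite -hj Hrho E e /cmb /=; congr pair; lra.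
Qed.

Lemma rho_nofix i : rho (z i) <> z i.
Proof.
rewrite Hrho; case E: (z i) => [x y] /= [hx hy]; apply: (NZ (i := i)).
rewrite E; congr pair; lra.
Qed.

Lemma SC i j (c : R) : -1 < c < 1 ->
  (z j).1 = c * (z i).1 -> (z j).2 = c * (z i).2 -> False.
Proof.
move=> hc e1 e2.
have [k hk] := Hrorb i.
apply: (HGL (t := (1 + c) / 2) (zG i) (zG k)).
- move=> e; apply: (rho_nofix (i := i)); by rewrite hk e.
- lra.
- have -> : cmb ((1 + c) / 2) (z i) (z k) = z j; last exact: zG.
  have -> : z j = ((z j).1, (z j).2) by case: (z j).
  rewrite -hk Hrho e1 e2 /cmb /=; congr pair; field=> //.
Qed.

Lemma PL i j : (z i).1 * (z j).2 - (z i).2 * (z j).1 = 0 ->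
  z j = z i \/ z j = (- (z i).1, - (z i).2).
Proof.
have ei : z i = ((z i).1, (z i).2) by case: (z i).
have ej : z j = ((z j).1, (z j).2) by case: (z j).
have hSC := @SC i j; have hSC' := @SC j i.
move: ei ej hSC hSC'.
set x := (z i).1; set y := (z i).2; set u := (z j).1; set v := (z j).2.
move=> ei ej hSC hSC' hc; clearbody x y u v.
have nz : 0 < x ^+ 2 + y ^+ 2.
  case: (eqVneq x 0) => hx; last nra.
  case: (eqVneq y 0) => hy; last nra.
  exfalso; apply: (NZ (i := i)); by rewrite ei hx hy.
have nz' : x ^+ 2 + y ^+ 2 != 0 by rewrite gt_eqF.
set mu := (x * u + y * v) / (x ^+ 2 + y ^+ 2).
have hu : mu * x = u.
  rewrite /mu mulrAC.
  have -> : (x * u + y * v) * x = u * (x ^+ 2 + y ^+ 2) + y * (x * v - y * u) by ring.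
  by rewrite hc mulr0 addr0 mulfK.
have hv : mu * y = v.
  rewrite /mu mulrAC.
  have -> : (x * u + y * v) * y = v * (x ^+ 2 + y ^+ 2) - x * (x * v - y * u) by ring.
  by rewrite hc mulr0 subr0 mulfK.
have big : (mu < -1) || (1 < mu) -> False.
  move=> hb.
  have m0 : mu != 0 by apply/eqP => m0; rewrite m0 in hb; move: hb; lra.
  have hV := mulVf m0.
  apply: (hSC' (mu^-1)).
  - exact: invb hV hb.
  - by rewrite -hu mulrA hV mul1r.
  - by rewrite -hv mulrA hV mul1r.
case: (ltrgtP mu 1) => h1; case: (ltrgtP mu (-1)) => h2.
- by exfalso; apply: big; rewrite h2.
- exfalso; apply: (hSC mu); [by rewrite h1 h2|by rewrite hu|by rewrite hv].
- by right; rewrite ej -hu -hv h2 !mulN1r.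
- by exfalso; apply: big; rewrite h2.
- by exfalso; apply: big; rewrite h1 orbT.
- by exfalso; move: h1 h2; lra.
- by exfalso; move: h1 h2; lra.
- by left; rewrite ej ei -hu -hv h1 !mul1r.
- by exfalso; move: h1 h2; lra.
Qed.

Lemma F1 c s : (forall i, refl c s (z i) = z i) -> False.
Proof.
move=> H.
have step : forall i, z (i + 1) = (- (z i).1, - (z i).2).
  move=> i.
  have := PL (i := i) (j := i + 1).
  have := H i; have := H (i + 1).
  case E1: (z (i + 1)) => [u v]; case E2: (z i) => [x y].
  rewrite /refl /= => -[e1 e2] [e3 e4] hPL.
  have hc : x * v - y * u = 0.
    case: (eqVneq (c - 1) 0) => hc1; last first.
      apply: (mulfI hc1); rewrite mulr0.
      have -> : (c - 1) * (x * v - y * u) = v * (c * x + s * y - x) - y * (c * u + s * v - u) by ring.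
      by rewrite e1 e3 !subrr !mulr0 subrr.
    case: (eqVneq s 0) => hs1; last first.
      apply: (mulfI hs1); rewrite mulr0.
      have -> : s * (x * v - y * u) = v * (s * x - c * y - y) - y * (s * u - c * v - v) by ring.
      by rewrite e2 e4 !subrr !mulr0 subrr.
    have c1 : c = 1 by move/eqP: hc1; rewrite subr_eq0 => /eqP.
    rewrite c1 hs1 in e2 e4.
    have y0 : y = 0 by move: e2; lra.
    have v0 : v = 0 by move: e4; lra.
    by rewrite y0 v0 !mulr0 !mul0r subrr.
  case: (hPL hc) => // e; exfalso; apply: (Hz.2 i); by rewrite E1 E2.
have h2 : forall i, z (i + 2%:Z) = z i.
  move=> i; have -> : i + 2%:Z = (i + 1) + 1 by lia.
  rewrite step step /= !opprK; by case: (z i).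
apply: (Hper.2.2 2) => //; lia.
Qed.

Lemma INV (f : pt R -> pt R) d : (forall q, f (f q) = q) ->
  (forall i, f (z i) = z (d + i)) -> ~ (forall i, f (z i) = z i) ->
  ~~ odd p /\ forall i, f (z i) = z (i + (p %/ 2)%:Z).
Proof.
move=> inv hf nf.
have h2 : forall i, z (i + 2 * d) = z i.
  move=> i; have := inv (z i); rewrite hf hf => <-; congr z; lia.
have [m hm] := zmin h2.
have [a [ma|ma]] : exists a, m = 2 * a \/ m = 2 * a + 1 by exists (m %/ 2)%Z; lia.
- exfalso; apply: nf => i; rewrite hf -(zper a i); congr z; nia.
- have pe : ~~ odd p by nia.
  split => // i; rewrite hf -(zper a (i + (p %/ 2)%:Z)); congr z; nia.
Qed.

Lemma REDUCE (f : pt R -> pt R) k : (forall i, f (z i) = z (k - i)) ->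
  (absz (k %% p%:Z)%Z < p)%N /\
  (k - (absz (k %% p%:Z)%Z)%:Z = (k %/ p%:Z)%Z * p%:Z) /\
  forall i, f (z i) = z ((absz (k %% p%:Z)%Z)%:Z - i).
Proof.
move=> H.
have p0 : (0 < p)%N := Hper.1.
have e := divz_eq k p%:Z.
have hb : 0 <= (k %% p%:Z)%Z < p%:Z by lia.
split; first lia.
split; first by move: e hb; move: (k %/ p%:Z)%Z (k %% p%:Z)%Z => q r e hb; lia.
move=> i; rewrite H -(zper (k %/ p%:Z)%Z ((absz (k %% p%:Z)%Z)%:Z - i)); congr z.
move: e hb; move: (k %/ p%:Z)%Z (k %% p%:Z)%Z => q r e hb; lia.
Qed.

Lemma REV k : (forall i, rho (z i) = z (k - i)) -> ~~ odd p /\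
  exists k' : nat, [/\ (0 < k' < p)%N, odd k' & forall i, rho (z i) = z (k'%:Z - i)].
Proof.
move=> H.
have noFix : forall i m, k - i <> i + m * p%:Z.
  move=> i m e; apply: (rho_nofix (i := i)); rewrite H e; exact: zper.
have [a ka] : exists a, k = 2 * a + 1.
  exists (k %/ 2)%Z.
  have : k = 2 * (k %/ 2)%Z \/ k = 2 * (k %/ 2)%Z + 1 by lia.
  case=> // e; exfalso; apply: (noFix (k %/ 2)%Z 0); rewrite mul0r addr0; lia.
have pe : ~~ odd p.
  apply/negP => po; apply: (noFix (a + (p %/ 2)%:Z + 1) (-1)); lia.
split => //.
have [hlt [he hf]] := REDUCE H.
exists (absz (k %% p%:Z)%Z).
have hodd : odd (absz (k %% p%:Z)%Z).
  have [h ph] : exists h : nat, p = (2 * h)%N by exists (p %/ 2)%N; lia.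
  move: he; rewrite ph; move: (k %/ _)%Z (absz _) => q r.
  have -> : q * (2 * h)%N%:Z = 2 * (q * h%:Z) by rewrite PoszM; ring.
  move: (q * h%:Z) => t; lia.
split => //; apply/andP; split => //; move: hodd; case: (absz _) => //.
Qed.

Lemma UNIQ (f : pt R -> pt R) (k1 k2 : nat) : (k1 < p)%N -> (k2 < p)%N ->
  (forall i, f (z i) = z (k1%:Z - i)) -> (forall i, f (z i) = z (k2%:Z - i)) ->
  k1 = k2.
Proof.
move=> h1 h2 e1 e2.
have : forall i, z (i + (k2%:Z - k1%:Z)) = z i.
  move=> i; have := e2 (k1%:Z - i); rewrite e1 => h.
  have -> : i + (k2%:Z - k1%:Z) = k2%:Z - (k1%:Z - i) by lia.
  rewrite -h; congr z; lia.
case/zmin => m hm.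
have [m0|[hm0|hm0]] : m = 0 \/ 1 <= m \/ m <= -1 by lia.
- by rewrite m0 mul0r in hm; lia.
- have : p%:Z <= m * p%:Z by nia.
  lia.
- have : m * p%:Z <= - p%:Z by nia.
  lia.
Qed.

Lemma rho_inv q : rho (rho q) = q.
Proof. by rewrite !Hrho /= !opprK; case: q. Qed.

Lemma NOTBOTH sigma c s : (forall q, sigma q = refl c s q) -> ~~ odd p ->
  (forall i, rho (z i) = z (i + (p %/ 2)%:Z)) ->
  ((forall i, sigma (z i) = z ((p %/ 2)%:Z + i)) \/
   (forall i, (rho \o sigma) (z i) = z ((p %/ 2)%:Z + i))) -> False.
Proof.
move=> hs pe hr [h|h].
- apply: (F1 (c := - c) (s := - s)) => i.
  have -> : refl (- c) (- s) (z i) = rho (sigma (z i)).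
    by rewrite Hrho hs /refl /=; congr pair; ring.
  rewrite h hr -[RHS](zper 1 i); congr z; lia.
- apply: (F1 (c := c) (s := s)) => i; rewrite -hs.
  have := h i; rewrite /= addrC -hr => e.
  by rewrite -(rho_inv (sigma (z i))) e rho_inv.
Qed.

End Main.

Unset Implicit Arguments.

Theorem mainTheorem10 (R : realType) (n : nat) (G : set (pt R))
  (rho sigma : pt R -> pt R) (z : int -> pt R) (p : nat) :
  (0 < n)%N ->
  Dn_billiard_curve n G ->
  is_rotation n rho -> order2 rho ->
  is_reflection n sigma ->
  billiard_seq G z ->
  minimal_period z p -> (3 <= p)%N ->
  Hsym n z = gen_subgroup rho sigma ->
  ~~ odd p /\
  let I := (forall i, rho (z i) = z (i + (p %/ 2)%:Z)) /\
           (exists! k : nat, (k < p)%N /\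
              forall i, sigma (z i) = z (k%:Z - i)) in
  let II := (exists! k : nat, [/\ (0 < k < p)%N, odd k &
              forall i, rho (z i) = z (k%:Z - i)]) /\
            ((forall i, sigma (z i) = z ((p %/ 2)%:Z + i)) \/
             (forall i, (rho \o sigma) (z i) = z ((p %/ 2)%:Z + i))) in
  (I /\ ~ II) \/ (~ I /\ II).
Proof.
move=> n0 HB Hrot Ho2 Hrefl Hbz Hmp Hp3 HH.
have HGL := GL HB.
have Hrho := rho_form Hrot Ho2.
have [c [s [cs Hs]]] := sigma_form Hrefl.
have memH : forall h, gen2 rho sigma h -> exists k : int,
    (forall i, h (z i) = z (k + i)) \/ (forall i, h (z i) = z (k - i)).
  move=> h gh; have : Hsym n z h by rewrite HH.
  by case.
have Hrorb : forall i, exists j, rho (z i) = z j.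
  move=> i; have [k [hk|hk]] := memH _ (gen2_a rho sigma); eexists; exact: hk.
have nofix := rho_nofix HGL Hbz Hrho Hrorb.
have F1' := F1 HGL Hbz Hmp Hp3 Hrho Hrorb.
have rinv := rho_inv Hrho.
have sinv : forall q, sigma (sigma q) = q by move=> q; rewrite !Hs refl_inv.
have cs' : (- c) ^+ 2 + (- s) ^+ 2 = 1 by rewrite !sqrrN.
have Hrs : forall q, (rho \o sigma) q = refl (- c) (- s) q.
  by move=> q; rewrite /= Hrho Hs /refl /=; congr pair; ring.
have rsinv : forall q, (rho \o sigma) ((rho \o sigma) q) = q.
  by move=> q; rewrite !Hrs refl_inv.
have nfs : ~ (forall i, sigma (z i) = z i).
  by move=> h; apply: (F1' c s) => i; rewrite -Hs h.
have nfrs : ~ (forall i, (rho \o sigma) (z i) = z i).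
  by move=> h; apply: (F1' (- c) (- s)) => i; rewrite -Hrs h.
have nfr : ~ (forall i, rho (z i) = z i) by move=> h; exact: (nofix 0 (h 0)).
have Hsk := memH _ (gen2_b rho sigma).
have notboth := NOTBOTH HGL Hbz Hmp Hp3 Hrho Hrorb Hs.
have [k [hk|hk]] := memH _ (gen2_a rho sigma).
- have [pe hr] := INV Hmp Hp3 rinv hk nfr.
  split => //; cbv zeta; left; split; last first.
    by move=> [_ hII]; exact: notboth pe hr hII.
  split => //.
  case: Hsk => m [hm|hm].
    exfalso; have [_ hsig] := INV Hmp Hp3 sinv hm nfs.
    by apply: (notboth pe hr); left => i; rewrite hsig addrC.
  have [hlt [_ hf]] := REDUCE Hmp Hp3 hm.
  exists (absz (m %% p%:Z)%Z); split; first by split.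
  move=> k' [hk'1 hk'2]; exact: (UNIQ Hmp Hp3 hlt hk'1 hf hk'2).
- have [pe [k' [hk'1 hk'2 hk'3]]] := REV HGL Hbz Hmp Hp3 Hrho Hrorb hk.
  have II2 : (forall i, sigma (z i) = z ((p %/ 2)%:Z + i)) \/
             (forall i, (rho \o sigma) (z i) = z ((p %/ 2)%:Z + i)).
    case: Hsk => m [hm|hm].
      left; have [_ h] := INV Hmp Hp3 sinv hm nfs.
      by move=> i; rewrite h addrC.
    right.
    have hf : forall i, (rho \o sigma) (z i) = z ((k - m) + i).
      by move=> i; rewrite /= hm hk; congr z; lia.
    have [_ h] := INV Hmp Hp3 rsinv hf nfrs.
    by move=> i; rewrite h addrC.
  split => //; cbv zeta; right; split.
    by move=> [hI _]; exact: notboth pe hI II2.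
  split => //.
  exists k'; split; first by split.
  move=> k'' [hk''1 hk''2 hk''3].
  have /andP[_ hlt] := hk'1; have /andP[_ hlt'] := hk''1.
  exact: (UNIQ Hmp Hp3 hlt hlt' hk'3 hk''3).
Qed.
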